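(* For every two integers $m,n\ge2$ there exists a mapping $h_m^n:\mathbb Z_m^n\to\{0,\ldots,4m\}^{2n}$ such that for every $q\in[2,\infty)$ and every $x,y\in\mathbb Z_m^n$, $$m\Big(\sum_{j=1}^n\big|e^{2\pi ix_j/m}-e^{2\pi iy_j/m}\big|^q\Big)^{1/q}\le\|h_m^n(x)-h_m^n(y)\|_q\le 3m\Big(\sum_{j=1}^n\big|e^{2\pi ix_j/m}-e^{2\pi iy_j/m}\big|^q\Big)^{1/q},$$ where $\|\cdot\|_q$ is the $\ell_q$ norm on $\mathbb R^{2n}$.
   Context: $\mathbb Z_m^n=(\mathbb Z/m\mathbb Z)^n$; the expression $e^{2\pi i x_j/m}$ is well defined for $x_j\in\mathbb Z/m\mathbb Z$. *)

(* Defs.v *)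
From Stdlib Require Import Reals.
From mathcomp Require Import all_boot.
Set Implicit Arguments.
Local Open Scope R_scope.
Unset Strict Implicit.
Unset Printing Implicit Defensive.

(* Real power x^y for x >= 0, with the convention 0^y = 0 (y > 0);
   Stdlib's Rpower 0 y would be 1, which is why we patch it. *)
Definition rpow (x y : R) : R :=
  if Req_EM_T x 0 then R0 else Rpower x y.

Definition cdist (m a b : nat) : R :=
  let ta := (2 * PI * INR a / INR m) in
  let tb := (2 * PI * INR b / INR m) in
  sqrt ((cos ta - cos tb) ^ 2 + (sin ta - sin tb) ^ 2).

Definition lqnorm (q : R) (k : nat) (v : 'I_k -> R) : R :=
  rpow (\big[Rplus/R0]_(j < k) rpow (Rabs (v j)) q) (/ q).

(* Main.v *)
Require Import Defs.
From Stdlib Require Import Reals Lra Lia Psatz ZArith.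
From mathcomp Require Import all_boot.
From HB Require Import structures.
Local Open Scope R_scope.

Lemma rpow_ge0 x y : 0 <= rpow x y.
Proof. unfold rpow; destruct (Req_EM_T x 0); simpl; [lra|]. unfold Rpower; left; apply exp_pos. Qed.

Lemma rpow0 y : rpow 0 y = 0.
Proof. unfold rpow; destruct (Req_EM_T 0 0); simpl; [lra|congruence]. Qed.

Lemma rpow_pos x y : 0 < x -> rpow x y = Rpower x y.
Proof. intros; unfold rpow; destruct (Req_EM_T x 0); simpl; [lra|auto]. Qed.

Lemma rpow_le x z y : 0 <= y -> 0 <= x <= z -> rpow x y <= rpow z y.
Proof.
  intros hy [hx hxz]. destruct hx as [hx|hx].
  - rewrite !rpow_pos; try lra. apply Rle_Rpower_l; lra.
  - subst; rewrite rpow0; apply rpow_ge0.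
Qed.

Lemma rpow_mul x z y : 0 <= x -> 0 <= z -> rpow (x * z) y = rpow x y * rpow z y.
Proof.
  intros [hx|hx] [hz|hz]; try (subst; rewrite ?Rmult_0_l ?Rmult_0_r !rpow0; ring).
  rewrite !rpow_pos; try nra. now rewrite Rpower_mult_distr.
Qed.

Lemma rpow_inv x y : 0 <= x -> y <> 0 -> rpow (rpow x y) (/ y) = x.
Proof.
  intros [hx|hx] hy; [|subst; rewrite !rpow0; auto].
  rewrite (rpow_pos _ _ hx). rewrite rpow_pos; [|unfold Rpower; apply exp_pos].
  rewrite Rpower_mult Rinv_r // Rpower_1 //.
Qed.

Lemma rpow_split x y : 0 <= x -> rpow x y = x ^ 2 * rpow x (y - 2).
Proof.
  intros [hx|hx]; [|subst; rewrite !rpow0; ring].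
  rewrite !rpow_pos //. replace y with (INR 2 + (y - 2)) at 1 by (simpl; ring).
  rewrite Rpower_plus Rpower_pow //.
Qed.

Lemma rpow_sum_le u v q : 2 <= q ->
  rpow (Rabs u) q + rpow (Rabs v) q <= rpow (sqrt (u^2 + v^2)) q.
Proof.
  intros hq. set E := sqrt (u^2+v^2).
  have hE2 : E ^ 2 = u^2 + v^2.
  { unfold E, pow; rewrite !Rmult_1_r sqrt_sqrt; nra. }
  have hE0 : 0 <= E by apply sqrt_pos.
  have hu : Rabs u <= E.
  { apply Rsqr_incr_0_var; [|auto]. unfold Rsqr. rewrite -Rabs_mult Rabs_right; nra. }
  have hv : Rabs v <= E.
  { apply Rsqr_incr_0_var; [|auto]. unfold Rsqr. rewrite -Rabs_mult Rabs_right; nra. }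
  rewrite (rpow_split _ _ (Rabs_pos u)) (rpow_split _ _ (Rabs_pos v)) (rpow_split _ _ hE0).
  have h1 := rpow_le _ _ (q - 2) (ltac:(lra)) (conj (Rabs_pos u) hu).
  have h2 := rpow_le _ _ (q - 2) (ltac:(lra)) (conj (Rabs_pos v) hv).
  have ->: Rabs u ^ 2 = u ^ 2 by unfold pow; rewrite !Rmult_1_r -Rabs_mult Rabs_right; nra.
  have ->: Rabs v ^ 2 = v ^ 2 by unfold pow; rewrite !Rmult_1_r -Rabs_mult Rabs_right; nra.
  rewrite hE2.
  have := rpow_ge0 (Rabs u) (q-2). have := rpow_ge0 (Rabs v) (q-2). nra.
Qed.

Lemma cdist_sym m a b : cdist m a b = cdist m b a.
Proof. unfold cdist; f_equal; ring. Qed.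

Lemma cdist_sin m a b : cdist m a b =
  sqrt (4 * (sin ((2 * PI * INR a / INR m - 2 * PI * INR b / INR m) / 2)) ^ 2).
Proof.
  unfold cdist; f_equal.
  set A := 2 * PI * INR a / INR m. set B := 2 * PI * INR b / INR m.
  have h := cos_2a_sin ((A - B) / 2).
  replace (2 * ((A - B) / 2)) with (A - B) in h by field.
  rewrite cos_minus in h.
  have ha := sin2_cos2 A. have hb := sin2_cos2 B. unfold Rsqr in *.
  unfold pow. nra.
Qed.

Lemma sin_pim m : (2 <= m)%N -> 5/4 <= INR m * sin (PI / INR m).
Proof.
  move=> hm.
  have hpi1 := PI2_3_2. have hpi2 := PI_4.
  case: (m =P 2%N) => [->|hm2].
  - simpl INR. replace (PI / (1+1)) with (PI/2) by field. rewrite sin_PI2. lra.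
  - have hm3 : 3 <= INR m.
    { replace 3 with (INR 3) by (simpl; ring). apply le_INR. apply/leP.
      have h3 : (2 < m)%N by rewrite ltn_neqAle hm andbT; apply/eqP => h; apply hm2; rewrite h.
      exact h3. }
    set y := PI / INR m.
    have hy0 : 0 <= y by unfold y, Rdiv; apply Rmult_le_pos; [lra|left; apply Rinv_0_lt_compat; lra].
    have hym : y * INR m = PI by unfold y; field; lra.
    have hy1 : y <= 4/3.
    { unfold y. apply Rmult_le_reg_r with (INR m); [lra|]. rewrite hym. nra. }
    have [hs _] := sin_bound y 0 hy0 ltac:(lra).
    unfold sin_approx, sin_term in hs. simpl in hs.
    nra.
Qed.

Lemma cdist_lb_lt m a b : (2 <= m)%N -> (a < m)%N -> (b < a)%N ->
  5/2 <= INR m * cdist m a b.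
Proof.
  move=> hm ha hba.
  have hpi1 := PI2_3_2. have hpi2 := PI_4.
  have hm2 : 2 <= INR m by replace 2 with (INR 2) by (simpl; ring); apply le_INR; apply/leP.
  have hA : INR a + 1 <= INR m by rewrite -S_INR; apply le_INR; apply/leP.
  have hB : INR b + 1 <= INR a by rewrite -S_INR; apply le_INR; apply/leP.
  rewrite cdist_sin.
  set z := (2 * PI * INR a / INR m - 2 * PI * INR b / INR m) / 2.
  have hz : z = PI * (INR a - INR b) / INR m.
  { unfold z. field. apply Rgt_not_eq; lra. }
  set y := PI / INR m.
  have hy0 : 0 < y by unfold y, Rdiv; apply Rmult_lt_0_compat; [lra|apply Rinv_0_lt_compat; lra].
  have hym : y * INR m = PI by unfold y; field; lra.
  have hy2 : y <= PI / 2.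
  { apply Rmult_le_reg_r with (INR m); [lra|]. rewrite hym. nra. }
  have hzy : y <= z.
  { rewrite hz. apply Rmult_le_reg_r with (INR m); [lra|]. rewrite hym.
    unfold Rdiv. rewrite Rmult_assoc Rinv_l; [|apply Rgt_not_eq; lra]. nra. }
  have hzy2 : z <= PI - y.
  { rewrite hz. apply Rmult_le_reg_r with (INR m); [lra|].
    rewrite Rmult_minus_distr_r hym.
    unfold Rdiv. rewrite Rmult_assoc Rinv_l; [|apply Rgt_not_eq; lra]. have := pos_INR b. nra. }
  have hsin : sin y <= sin z.
  { destruct (Rle_dec z (PI/2)).
    - apply sin_incr_1; lra.
    - rewrite -(sin_PI_x z). apply sin_incr_1; lra. }
  have hsy := sin_pim _ hm. fold y in hsy.
  have hs0 : 0 <= sin z by apply sin_ge_0; lra.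
  replace (4 * sin z ^ 2) with ((2 * sin z) ^ 2) by ring.
  rewrite sqrt_pow2; [|lra]. nra.
Qed.

Lemma cdist_lb m a b : (2 <= m)%N -> (a < m)%N -> (b < m)%N -> a <> b ->
  5/2 <= INR m * cdist m a b.
Proof.
  move=> hm ha hb hab.
  case: (ltngtP a b) => h.
  - rewrite cdist_sym. by apply cdist_lb_lt.
  - by apply cdist_lb_lt.
  - by [].
Qed.

Definition fl (r : R) : nat := Z.to_nat (Int_part r).

Lemma fl_spec r : 0 <= r -> INR (fl r) <= r /\ r < INR (fl r) + 1.
Proof.
  move=> hr. have [h1 h2] := base_Int_part r.
  have hz : (0 <= Int_part r)%Z.
  { have : (-1 < Int_part r)%Z by apply lt_IZR; simpl; lra. lia. }
  unfold fl. rewrite INR_IZR_INZ Z2Nat.id //. lra.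
Qed.

Definition ang m a := 2 * PI * INR a / INR m.
Definition G1 m a := fl (2 * INR m * (1 + cos (ang m a))).
Definition G2 m a := fl (2 * INR m * (1 + sin (ang m a))).

Lemma fl_le m t : (2 <= m)%N -> -1 <= t <= 1 -> (fl (2 * INR m * (1 + t)) <= 4 * m)%N.
Proof.
  move=> hm ht.
  have hm0 : 0 <= INR m := pos_INR m.
  have [h1 _] := fl_spec (2 * INR m * (1 + t)) ltac:(nra).
  apply/leP. apply INR_le. rewrite -multE mult_INR. simpl (INR 4). nra.
Qed.

Lemma fl_err m t : (2 <= m)%N -> -1 <= t <= 1 ->
  2 * INR m * (1 + t) - 1 < INR (fl (2 * INR m * (1 + t))) <= 2 * INR m * (1 + t).
Proof.
  move=> hm ht. have hm0 : 0 <= INR m := pos_INR m.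
  have [h1 h2] := fl_spec (2 * INR m * (1 + t)) ltac:(nra). lra.
Qed.

Lemma core m a b q : (2 <= m)%N -> (a < m)%N -> (b < m)%N -> 2 <= q ->
  rpow (INR m * cdist m a b) q <=
    rpow (Rabs (INR (G1 m a) - INR (G1 m b))) q + rpow (Rabs (INR (G2 m a) - INR (G2 m b))) q
  <= rpow (3 * (INR m * cdist m a b)) q.
Proof.
  move=> hm ha hb hq.
  case: (eqVneq a b) => [<-|/eqP hab].
  - have -> : cdist m a a = 0.
    { unfold cdist. rewrite !Rminus_diag. replace ((0:R)^2 + 0^2) with 0 by ring. apply sqrt_0. }
    rewrite !Rminus_diag Rabs_R0 !Rmult_0_r !rpow0. lra.
  - have hX := cdist_lb _ _ _ hm ha hb hab.
    set X := INR m * cdist m a b in hX *.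
    have hm0 : 0 <= INR m := pos_INR m.
    set c := cos (ang m a) - cos (ang m b).
    set s := sin (ang m a) - sin (ang m b).
    have hd : X ^ 2 = INR m ^ 2 * (c^2 + s^2).
    { unfold X, cdist. rewrite Rpow_mult_distr. f_equal.
      unfold pow. rewrite !Rmult_1_r sqrt_sqrt //. apply Rplus_le_le_0_compat; apply Rle_0_sqr. }
    set p := 2 * INR m * c. set r := 2 * INR m * s.
    have hpr : p^2 + r^2 = 4 * X^2 by rewrite hd; unfold p, r; ring.
    set u := INR (G1 m a) - INR (G1 m b).
    set v := INR (G2 m a) - INR (G2 m b).
    have hu : p - 1 < u < p + 1.
    { have := fl_err _ _ hm (COS_bound (ang m a)).
      have := fl_err _ _ hm (COS_bound (ang m b)).
      unfold u, p, c, G1. lra. }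
    have hv : r - 1 < v < r + 1.
    { have := fl_err _ _ hm (SIN_bound (ang m a)).
      have := fl_err _ _ hm (SIN_bound (ang m b)).
      unfold v, r, s, G2. lra. }
    have hX0 : 0 <= X by lra.
    split.
    + have := rpow_ge0 (Rabs u) q. have := rpow_ge0 (Rabs v) q.
      destruct (Rle_dec X (Rabs u)) as [h|h].
      * have := rpow_le _ _ q ltac:(lra) (conj hX0 h). lra.
      destruct (Rle_dec X (Rabs v)) as [h'|h'].
      * have := rpow_le _ _ q ltac:(lra) (conj hX0 h'). lra.
      * exfalso.
        have hp : -(X+1) < p < X + 1 by split_Rabs; lra.
        have hr : -(X+1) < r < X + 1 by split_Rabs; lra.
        have : p^2 < (X+1)^2 by nra.
        have : r^2 < (X+1)^2 by nra.
        nra.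
    + apply Rle_trans with (rpow (sqrt (u^2 + v^2)) q); first by apply rpow_sum_le.
      apply rpow_le; first lra.
      split; first by apply sqrt_pos.
      have hp : Rabs p <= 2 * X.
      { apply Rsqr_incr_0_var; [|lra]. unfold Rsqr. rewrite -Rabs_mult Rabs_right; nra. }
      have hr : Rabs r <= 2 * X.
      { apply Rsqr_incr_0_var; [|lra]. unfold Rsqr. rewrite -Rabs_mult Rabs_right; nra. }
      have hu2 : u^2 <= p^2 + 2 * Rabs p + 1 by split_Rabs; nra.
      have hv2 : v^2 <= r^2 + 2 * Rabs r + 1 by split_Rabs; nra.
      rewrite -(sqrt_pow2 (3 * X)); last lra.
      apply sqrt_le_1_alt. nra.
Qed.


HB.instance Definition _ := Monoid.isComLaw.Build R R0 Rplus (fun a b c => esym (Rplus_assoc a b c)) Rplus_comm Rplus_0_l.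

Lemma sum2 N (F : nat -> R) :
  \big[Rplus/R0]_(k < 2 * N) F k = \big[Rplus/R0]_(j < N) (F j + F (N + j)%N).
Proof.
  rewrite big_split /= -!(big_mkord xpredT) mul2n -addnn.
  rewrite (@big_cat_nat _ _ _ N 0 (N + N) _ _ (leq0n N) (leq_addr N N)) /=. congr (_ + _).
  rewrite -{1}(add0n N) big_addn addKn big_mkord. apply: eq_bigr => i _. by rewrite addnC.
Qed.

Lemma sum_le N (F G : 'I_N -> R) : (forall i, F i <= G i) ->
  \big[Rplus/R0]_(i < N) F i <= \big[Rplus/R0]_(i < N) G i.
Proof. move=> h. apply: (big_ind2 (fun a b => a <= b)) => //; [lra|]. move=> *; lra. Qed.

Lemma sum_scale N (F : 'I_N -> R) c :
  c * \big[Rplus/R0]_(i < N) F i = \big[Rplus/R0]_(i < N) (c * F i).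
Proof. apply: (big_ind2 (fun a b => c * a = b)) => //; [ring|]. move=> ? ? ? ? <- <-; ring. Qed.

Lemma sum_ge0 N (F : 'I_N -> R) : (forall i, 0 <= F i) -> 0 <= \big[Rplus/R0]_(i < N) F i.
Proof. move=> h. apply: (big_ind (fun a => 0 <= a)) => //; [lra|]. move=> *; lra. Qed.


Theorem mainTheorem7 (m n : nat) (hm : (2 <= m)%N) (hn : (2 <= n)%N) :
  exists h : ('I_n -> 'I_m) -> 'I_((2 * n)%N) -> nat,
    (forall x k, (h x k <= 4 * m)%N) /\
    (forall (q : R) (x y : 'I_n -> 'I_m), 2 <= q ->
       INR m * lqnorm q (fun j : 'I_n => cdist m (x j) (y j))
          <= lqnorm q (fun k : 'I_((2 * n)%N) => INR (h x k) - INR (h y k))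
          <= 3 * INR m * lqnorm q (fun j : 'I_n => cdist m (x j) (y j))).
Proof.
  case: n hn => [//|n'] hn.
  pose hh (x : 'I_n'.+1 -> 'I_m) (k : nat) : nat :=
    if (k < n'.+1)%N then G1 m (x (inord k)) else G2 m (x (inord (k - n'.+1))).
  exists (fun x k => hh x (nat_of_ord k)).
  split.
  { move=> x k. rewrite /hh. case: ifP => _; apply fl_le => //;
    [apply COS_bound | apply SIN_bound]. }
  move=> q x y hq.
  have hm0 : 0 <= INR m := pos_INR m.
  set S := \big[Rplus/R0]_(j < n'.+1) rpow (Rabs (cdist m (x j) (y j))) q.
  set T := \big[Rplus/R0]_(k < 2 * n'.+1) rpow (Rabs (INR (hh x k) - INR (hh y k))) q.
  have hT : T = \big[Rplus/R0]_(j < n'.+1)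
     (rpow (Rabs (INR (G1 m (x j)) - INR (G1 m (y j)))) q +
      rpow (Rabs (INR (G2 m (x j)) - INR (G2 m (y j)))) q).
  { rewrite /T (sum2 n'.+1 (fun k => rpow (Rabs (INR (hh x k) - INR (hh y k))) q)).
    apply: eq_bigr => j _. rewrite /hh ltn_ord.
    have -> : (n'.+1 + j < n'.+1)%N = false by rewrite ltnNge leq_addr.
    by rewrite addKn inord_val. }
  have hd0 : forall j, 0 <= cdist m (x j) (y j) by move=> j; apply sqrt_pos.
  have hS0 : 0 <= S by apply sum_ge0 => j; apply rpow_ge0.
  have hlo : rpow (INR m) q * S <= T.
  { rewrite hT /S sum_scale. apply sum_le => j.
    rewrite (Rabs_right (cdist m (x j) (y j))); last by apply Rle_ge.
    rewrite -rpow_mul //.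
    have [h _] := core m (x j) (y j) q hm (ltn_ord _) (ltn_ord _) hq. exact h. }
  have hup : T <= rpow (3 * INR m) q * S.
  { rewrite hT /S sum_scale. apply sum_le => j.
    rewrite (Rabs_right (cdist m (x j) (y j))); last by apply Rle_ge.
    rewrite -rpow_mul; [|try lra; apply hd0..]. rewrite Rmult_assoc.
    have [_ h] := core m (x j) (y j) q hm (ltn_ord _) (ltn_ord _) hq. exact h. }
  have hiq : 0 <= / q by left; apply Rinv_0_lt_compat; lra.
  have hq0 : q <> 0 by lra.
  rewrite /lqnorm -/S -/T.
  split.
  - rewrite -{1}(rpow_inv (INR m) q hm0 hq0) -rpow_mul; [|apply rpow_ge0|done].
    apply rpow_le => //. split => //. apply Rmult_le_pos => //; apply rpow_ge0.
  - rewrite -(rpow_inv (3 * INR m) q ltac:(lra) hq0) -rpow_mul; [|apply rpow_ge0|done].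
    apply rpow_le => //. split => //. apply Rle_trans with (2 := hlo).
    apply Rmult_le_pos => //; apply rpow_ge0.
Qed.
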